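(* The sequent calculi $G(\mathbf{K4}_h)$, $G(\mathbf{KD4}_h)$ and $G(\mathbf{S4}_h)$ have the cut elimination property: every sequent provable in one of these systems has a proof in the same system that does not use the cut rule.
   Context: The language $\mathcal{L}_\infty$ consists of modal formulas built from propositional atoms, $\bot,\top$, the connectives $\neg,\wedge,\vee,\rightarrow$ and infinitely many unary modalities $\Box_n$ ($n\in\mathbb{N}$), with the restriction that $\Box_n A$ is a formula only if $n$ is strictly greater than the index of every box occurring in $A$. All formulas are in $\mathcal{L}_\infty$. Sequent calculi: sequents $\Gamma\Rightarrow\Delta$ with finite multisets. All three systems contain the axioms $A\Rightarrow A$ and $\bot\Rightarrow$, the structural rules of left/right weakening, left/right contraction and cut (from $\Gamma_0\Rightarrow\Delta_0,A$ and $\Gamma_1,A\Rightarrow\Delta_1$ infer $\Gamma_0,\Gamma_1\Rightarrow\Delta_0,\Delta_1$), and the usual classical (LK-style) left and right rules for $\wedge,\vee,\rightarrow,\neg$. Modal rules (in each, the side condition is $n_i<n$ for all $i\in I$): $\Box_{4_h}R$: from $\{\sigma_r\}_{r\in R},\{\gamma_i,\Box_{n_i}\gamma_i\}_{i\in I}\Rightarrow A$ infer $\{\Box_n\sigma_r\}_{r\in R},\{\Box_{n_i}\gamma_i\}_{i\in I}\Rightarrow\Box_nA$; $\Box_{D_h}R$: from $\{\sigma_r\}_{r\in R},\{\gamma_i,\Box_{n_i}\gamma_i\}_{i\in I}\Rightarrow$ infer $\{\Box_n\sigma_r\}_{r\in R},\{\Box_{n_i}\gamma_i\}_{i\in I}\Rightarrow$;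 $\Box_{S_h}R$: from $\{\sigma_r\}_{r\in R},\{\Box_{n_i}\gamma_i\}_{i\in I}\Rightarrow A$ infer $\{\Box_n\sigma_r\}_{r\in R},\{\Box_{n_i}\gamma_i\}_{i\in I}\Rightarrow\Box_nA$; $\Box_hL$: from $\Gamma,A\Rightarrow\Delta$ infer $\Gamma,\Box_nA\Rightarrow\Delta$. $G(\mathbf{K4}_h)$ = axioms + structural + propositional rules + $\Box_{4_h}R$; $G(\mathbf{KD4}_h)$ = $G(\mathbf{K4}_h)$ + $\Box_{D_h}R$; $G(\mathbf{S4}_h)$ = axioms + structural + propositional rules + $\Box_{S_h}R$ + $\Box_hL$. *)

(* Defs.v *)
From Stdlib Require Import List Permutation Arith.
Import ListNotations.

Inductive form : Type :=
| Atom : nat -> form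
| Bot : form
| Top : form
| Neg : form -> form
| And : form -> form -> form
| Or  : form -> form -> form
| Imp : form -> form -> form
| Box : nat -> form -> form.

Fixpoint boxes_lt (n : nat) (A : form) : Prop :=
  match A with
  | Atom _ | Bot | Top => True
  | Neg B => boxes_lt n B
  | And B C | Or B C | Imp B C => boxes_lt n B /\ boxes_lt n C
  | Box m B => m < n /\ boxes_lt n B
  end.

(** Membership in L_infty: [Box n A] is a formula only if [A] is one and
    [n] exceeds the index of every box occurring in [A]. *)
Fixpoint wf (A : form) : Prop :=
  match A with
  | Atom _ | Bot | Top => True
  | Neg B => wf B
  | And B C | Or B C | Imp B C => wf B /\ wf C
  | Box n B => wf B /\ boxes_lt n B
  end.

(** Sequents: pairs of finite multisets, represented as lists taken up to
    permutation (see rule [r_perm]). *)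
Definition sequent : Type := (list form * list form)%type.

Definition wf_seq (s : sequent) : Prop :=
  Forall wf (fst s) /\ Forall wf (snd s).

Inductive system : Type := K4h | KD4h | S4h.

Definition has_4 (S : system) : bool :=
  match S with K4h | KD4h => true | S4h => false end.
Definition has_D (S : system) : bool :=
  match S with KD4h => true | _ => false end.
Definition has_S (S : system) : bool :=
  match S with S4h => true | _ => false end.

Definition boxed (gs : list (nat * form)) : list form :=
  map (fun p => Box (fst p) (snd p)) gs.
Definition unboxed_and_boxed (gs : list (nat * form)) : list form :=
  flat_map (fun p => [snd p; Box (fst p) (snd p)]) gs.
Definition idx_below (n : nat) (gs : list (nat * form)) : Prop :=
  Forall (fun p => fst p < n) gs.

Inductive Rule (S : system) (c : bool) : list sequent -> sequent -> Prop :=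
| r_perm G D G' D' :
    Permutation G G' -> Permutation D D' ->
    Rule S c [(G, D)] (G', D')
| r_id A : Rule S c [] ([A], [A])
| r_bot : Rule S c [] ([Bot], [])
| r_wL G D A : Rule S c [(G, D)] (A :: G, D)
| r_wR G D A : Rule S c [(G, D)] (G, D ++ [A])
| r_cL G D A : Rule S c [(A :: A :: G, D)] (A :: G, D)
| r_cR G D A : Rule S c [(G, D ++ [A; A])] (G, D ++ [A])
| r_cut G0 D0 G1 D1 A :
    c = true ->
    Rule S c [(G0, D0 ++ [A]); (A :: G1, D1)] (G0 ++ G1, D0 ++ D1)
| r_andL1 G D A B : Rule S c [(A :: G, D)] (And A B :: G, D)
| r_andL2 G D A B : Rule S c [(B :: G, D)] (And A B :: G, D)
| r_andR G D A B :
    Rule S c [(G, D ++ [A]); (G, D ++ [B])] (G, D ++ [And A B])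
| r_orL G D A B :
    Rule S c [(A :: G, D); (B :: G, D)] (Or A B :: G, D)
| r_orR1 G D A B : Rule S c [(G, D ++ [A])] (G, D ++ [Or A B])
| r_orR2 G D A B : Rule S c [(G, D ++ [B])] (G, D ++ [Or A B])
| r_impL G0 D0 G1 D1 A B :
    Rule S c [(G0, D0 ++ [A]); (B :: G1, D1)] (Imp A B :: G0 ++ G1, D0 ++ D1)
| r_impR G D A B : Rule S c [(A :: G, D ++ [B])] (G, D ++ [Imp A B])
| r_negL G D A : Rule S c [(G, D ++ [A])] (Neg A :: G, D)
| r_negR G D A : Rule S c [(A :: G, D)] (G, D ++ [Neg A])
| r_box4R n (sig : list form) (gs : list (nat * form)) A :
    has_4 S = true -> idx_below n gs ->
    Rule S c [(sig ++ unboxed_and_boxed gs, [A])]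
             (map (Box n) sig ++ boxed gs, [Box n A])
| r_boxDR n (sig : list form) (gs : list (nat * form)) :
    has_D S = true -> idx_below n gs ->
    Rule S c [(sig ++ unboxed_and_boxed gs, [])]
             (map (Box n) sig ++ boxed gs, [])
| r_boxSR n (sig : list form) (gs : list (nat * form)) A :
    has_S S = true -> idx_below n gs ->
    Rule S c [(sig ++ boxed gs, [A])]
             (map (Box n) sig ++ boxed gs, [Box n A])
| r_boxL n G D A :
    has_S S = true ->
    Rule S c [(A :: G, D)] (Box n A :: G, D).

Inductive Der (S : system) (c : bool) : sequent -> Prop :=
| der ps s :
    Rule S c ps s -> wf_seq s ->
    (forall p, In p ps -> Der S c p) ->
    Der S c s.

(* Main.v *)
Require Import Defs.
From Stdlib Require Import List Permutation Arith Lia Setoid.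
Import ListNotations.

Definition form_eq_dec : forall x y : form, {x = y} + {x <> y}.
Proof. decide equality; apply Nat.eq_dec. Defined.

Definition rem (A : form) (l : list form) : list form :=
  filter (fun x => if form_eq_dec x A then false else true) l.

Lemma in_rem A x l : In x (rem A l) <-> In x l /\ x <> A.
Proof. unfold rem. rewrite filter_In. destruct (form_eq_dec x A); intuition congruence. Qed.

Lemma der_wf S c s : Der S c s -> wf_seq s.
Proof. intros []; auto. Qed.

Lemma der_wfL S c G D : Der S c (G,D) -> Forall wf G.
Proof. intros H; apply der_wf in H; destruct H; auto. Qed.
Lemma der_wfR S c G D : Der S c (G,D) -> Forall wf D.
Proof. intros H; apply der_wf in H; destruct H; auto. Qed.

Lemma der0 S c s : Rule S c [] s -> wf_seq s -> Der S c s.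
Proof. intros r w. apply (der _ _ [] s r w). intros q []. Qed.

Lemma der1 S c p s : Rule S c [p] s -> wf_seq s -> Der S c p -> Der S c s.
Proof. intros r w d. apply (der _ _ [p] s r w). intros q [<-|[]]; auto. Qed.

Lemma der2 S c p1 p2 s : Rule S c [p1;p2] s -> wf_seq s -> Der S c p1 -> Der S c p2 -> Der S c s.
Proof. intros r w d1 d2. apply (der _ _ [p1;p2] s r w). intros q [<-|[<-|[]]]; auto. Qed.

Lemma Forall_incl' (P : form -> Prop) l l' : Forall P l -> incl l' l -> Forall P l'.
Proof. rewrite !Forall_forall. intros H I x Hx. apply H, I, Hx. Qed.

Lemma der_perm S c G D G' D' : Der S c (G,D) -> Permutation G G' -> Permutation D D' -> Der S c (G',D').
Proof.
  intros d p1 p2. apply der1 with (G,D); [apply r_perm; auto| |exact d].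
  apply der_wf in d. destruct d as [w1 w2]; split; simpl in *.
  - eapply Forall_incl'; [exact w1|]. intros x Hx; eapply Permutation_in; [symmetry; exact p1| exact Hx].
  - eapply Forall_incl'; [exact w2|]. intros x Hx; eapply Permutation_in; [symmetry; exact p2| exact Hx].
Qed.

Lemma weakL S c G D Z : Der S c (G,D) -> Forall wf Z -> Der S c (Z ++ G, D).
Proof.
  induction Z as [|a Z IH]; simpl; intros d w; auto.
  inversion w; subst. apply der1 with (Z ++ G, D); [apply r_wL| |auto].
  split; simpl; [constructor; auto; apply Forall_app; split; auto; eapply der_wfL; eauto | eapply der_wfR; eauto].
Qed.

Lemma weakR S c G D Z : Der S c (G,D) -> Forall wf Z -> Der S c (G, D ++ Z).
Proof.
  revert D. induction Z as [|a Z IH]; simpl; intros D d w; [rewrite app_nil_r; auto|].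
  inversion w; subst. replace (D ++ a :: Z) with ((D ++ [a]) ++ Z) by (rewrite <- app_assoc; reflexivity).
  apply IH; auto. apply der1 with (G, D); [apply r_wR| |auto].
  split; simpl; [eapply der_wfL; eauto|apply Forall_app; split; eauto; eapply der_wfR; eauto].
Qed.

Lemma contrL S c W a X D : In a W -> Der S c (W ++ a :: X, D) -> Der S c (W ++ X, D).
Proof.
  intros Hin d. apply in_split in Hin. destruct Hin as [W1 [W2 ->]].
  assert (d' : Der S c (a :: a :: (W1 ++ W2 ++ X), D)).
  { eapply der_perm; [exact d| |reflexivity].
    rewrite <- app_assoc. simpl.
    transitivity (a :: W1 ++ W2 ++ a :: X); [symmetry; apply Permutation_middle|].
    apply perm_skip. rewrite (app_assoc W1 W2 (a :: X)), (app_assoc W1 W2 X).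
    symmetry; apply Permutation_middle. }
  assert (d'' : Der S c (a :: (W1 ++ W2 ++ X), D)).
  { apply der1 with (a :: a :: (W1 ++ W2 ++ X), D); [apply r_cL| |auto].
    apply der_wf in d'. destruct d' as [w1 w2]; split; simpl in *; auto. inversion w1; auto. }
  eapply der_perm; [exact d''| |reflexivity].
  rewrite <- app_assoc. simpl. apply Permutation_middle.
Qed.

Lemma contrR S c G W a X : In a W -> Der S c (G, W ++ a :: X) -> Der S c (G, W ++ X).
Proof.
  intros Hin d. apply in_split in Hin. destruct Hin as [W1 [W2 ->]].
  assert (d' : Der S c (G, (W1 ++ W2 ++ X) ++ [a;a])).
  { eapply der_perm; [exact d|reflexivity|].
    rewrite <- app_assoc. simpl.
    transitivity (a :: W1 ++ W2 ++ a :: X); [symmetry; apply Permutation_middle|].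
    transitivity (a :: a :: W1 ++ W2 ++ X).
    { apply perm_skip. rewrite (app_assoc W1 W2 (a :: X)), (app_assoc W1 W2 X).
      symmetry; apply Permutation_middle. }
    apply (Permutation_app_comm [a;a]). }
  assert (d'' : Der S c (G, (W1 ++ W2 ++ X) ++ [a])).
  { apply der1 with (G, (W1 ++ W2 ++ X) ++ [a;a]); [apply r_cR| |auto].
    apply der_wf in d'. destruct d' as [w1 w2]; split; simpl in *; auto.
    apply Forall_app in w2; destruct w2 as [w2 w3]; inversion w3; apply Forall_app; auto. }
  eapply der_perm; [exact d''|reflexivity|].
  transitivity (a :: W1 ++ W2 ++ X); [apply (Permutation_app_comm _ [a])|].
  rewrite <- app_assoc. simpl. apply Permutation_middle.
Qed.

Lemma contrL_all S c D X : forall W, incl X W -> Der S c (W ++ X, D) -> Der S c (W, D).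
Proof.
  induction X as [|a X IH]; intros W I d; [rewrite app_nil_r in d; auto|].
  apply IH; [intros y Hy; apply I; right; auto|]. apply contrL with a; auto. apply I; left; auto.
Qed.

Lemma contrR_all S c G X : forall W, incl X W -> Der S c (G, W ++ X) -> Der S c (G, W).
Proof.
  induction X as [|a X IH]; intros W I d; [rewrite app_nil_r in d; auto|].
  apply IH; [intros y Hy; apply I; right; auto|]. apply contrR with a; auto. apply I; left; auto.
Qed.

Lemma struct S c G D G' D' : Der S c (G,D) -> incl G G' -> incl D D' ->
  Forall wf G' -> Forall wf D' -> Der S c (G',D').
Proof.
  intros d I1 I2 w1 w2.
  apply contrL_all with G; auto. apply weakL; auto.
  apply contrR_all with D; auto. eapply der_perm; [apply weakR with (Z := D'); eauto|reflexivity|].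
  apply Permutation_app_comm.
Qed.

Arguments rem : simpl never.

Lemma perm_rem A l l' : Permutation l l' -> Permutation (rem A l) (rem A l').
Proof.
  induction 1; unfold rem in *; simpl; try reflexivity.
  - destruct (form_eq_dec x A); auto.
  - destruct (form_eq_dec x A), (form_eq_dec y A); try constructor; reflexivity.
  - etransitivity; eauto.
Qed.

Lemma Forall_rem A l : Forall wf l -> Forall wf (rem A l).
Proof. intros H. eapply Forall_incl'; [exact H|]. intros x Hx; apply in_rem in Hx; tauto. Qed.

Lemma in_boxed x gs : In x (boxed gs) <-> exists k g, In (k,g) gs /\ x = Box k g.
Proof.
  unfold boxed. rewrite in_map_iff. split.
  - intros [[k g] [<- H]]. eauto.
  - intros [k [g [H ->]]]. exists (k,g); auto.
Qed.

Lemma in_ub x gs : In x (unboxed_and_boxed gs) <-> exists k g, In (k,g) gs /\ (x = g \/ x = Box k g).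
Proof.
  unfold unboxed_and_boxed. rewrite in_flat_map. split.
  - intros [[k g] [H1 H2]]. simpl in H2. exists k, g. intuition.
  - intros [k [g [H [->| ->]]]]; exists (k,g); simpl; auto.
Qed.

Lemma in_mapbox x n sig : In x (map (Box n) sig) <-> exists y, In y sig /\ x = Box n y.
Proof. rewrite in_map_iff. firstorder. Qed.

Ltac inorm H := repeat (first [rewrite in_app_iff in H | rewrite in_rem in H | rewrite in_boxed in H
   | rewrite in_ub in H | rewrite in_mapbox in H | progress simpl in H]).

Ltac split_rems x := repeat match goal with |- context [rem ?A _] =>
   lazymatch goal with _ : x = A |- _ => fail | _ : x <> A |- _ => fail | _ => destruct (form_eq_dec x A) end end.

Ltac gnorm := repeat (first [rewrite in_app_iff | rewrite in_rem | rewrite in_boxed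
   | rewrite in_ub | rewrite in_mapbox | progress simpl]).

Ltac incl_tac := let x := fresh "x" in let H := fresh "Hin" in
  intros x H; repeat match goal with G : forall _, _ |- _ => clear G end;
  split_rems x; inorm H; gnorm;
  firstorder (subst; try congruence).

Ltac wf_decomp := repeat match goal with
  | H : wf_seq _ |- _ => unfold wf_seq in H; simpl in H; destruct H
  | H : Forall wf (_ ++ _) |- _ => apply Forall_app in H; destruct H
  | H : Forall wf (_ :: _) |- _ => apply Forall_cons_iff in H; destruct H
  | H : wf (And _ _) |- _ => destruct H
  | H : wf (Or _ _) |- _ => destruct H
  | H : wf (Imp _ _) |- _ => destruct H
  | H : wf (Neg _) |- _ => simpl in H
  | H : wf (Box _ _) |- _ => destruct H
  end.

Ltac wfd d := let h1 := fresh "w" in let h2 := fresh "w" in pose proof (der_wf _ _ _ d) as [h1 h2]; simpl in h1, h2.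

Ltac wf_tac := repeat (first [apply Forall_app; split | apply Forall_cons | apply Forall_rem | apply Forall_nil]);
   simpl; try tauto.


Ltac st d := apply struct with (1 := d); [incl_tac | incl_tac | wf_decomp; wf_tac | wf_decomp; wf_tac].

Tactic Notation "ap1" uconstr(R) constr(d) := eapply struct; [eapply der1 with (3 := d); [eapply R; eauto | split; wf_tac] | incl_tac | incl_tac | wf_tac | wf_tac].
Tactic Notation "ap2" uconstr(R) constr(d1) constr(d2) := eapply struct; [eapply der2 with (3 := d1) (4 := d2); [eapply R; eauto | split; wf_tac] | incl_tac | incl_tac | wf_tac | wf_tac].

Lemma L_ext S A Gx Dx ps s :
  Rule S false ps s -> wf_seq s -> Der S false s ->
  Forall wf Gx -> Forall wf Dx ->
  (forall p, In p ps -> Der S false (Gx ++ rem A (fst p), snd p ++ Dx)) ->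
  (forall p, In p ps -> Der S false p) ->
  (wf A -> Der S false (Gx ++ rem A [A], [A] ++ Dx)) ->
  (A = Bot -> Der S false (Gx, Dx)) ->
  (forall P Q G D, A = And P Q -> wf_seq (A :: G, D) ->
     Der S false (Gx ++ rem A (P :: G), D ++ Dx) -> Der S false (Gx ++ rem A (A :: G), D ++ Dx)) ->
  (forall P Q G D, A = And P Q -> wf_seq (A :: G, D) ->
     Der S false (Gx ++ rem A (Q :: G), D ++ Dx) -> Der S false (Gx ++ rem A (A :: G), D ++ Dx)) ->
  (forall P Q G D, A = Or P Q -> wf_seq (A :: G, D) ->
     Der S false (Gx ++ rem A (P :: G), D ++ Dx) -> Der S false (Gx ++ rem A (Q :: G), D ++ Dx) ->
     Der S false (Gx ++ rem A (A :: G), D ++ Dx)) ->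
  (forall P Q G0 D0 G1 D1, A = Imp P Q -> wf_seq (A :: G0 ++ G1, D0 ++ D1) ->
     Der S false (Gx ++ rem A G0, (D0 ++ [P]) ++ Dx) -> Der S false (Gx ++ rem A (Q :: G1), D1 ++ Dx) ->
     Der S false (Gx ++ rem A (A :: G0 ++ G1), (D0 ++ D1) ++ Dx)) ->
  (forall P G D, A = Neg P -> wf_seq (A :: G, D) ->
     Der S false (Gx ++ rem A G, (D ++ [P]) ++ Dx) -> Der S false (Gx ++ rem A (A :: G), D ++ Dx)) ->
  (forall n P G D, A = Box n P -> has_S S = true -> wf_seq (A :: G, D) ->
     Der S false (Gx ++ rem A (P :: G), D ++ Dx) -> Der S false (Gx ++ rem A (A :: G), D ++ Dx)) ->
  (forall m sig gs C, has_4 S = true -> idx_below m gs -> In A (map (Box m) sig ++ boxed gs) ->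
     wf_seq (map (Box m) sig ++ boxed gs, [Box m C]) ->
     Der S false (sig ++ unboxed_and_boxed gs, [C]) ->
     Der S false (Gx ++ rem A (sig ++ unboxed_and_boxed gs), [C] ++ Dx) ->
     Der S false (Gx ++ rem A (map (Box m) sig ++ boxed gs), [Box m C] ++ Dx)) ->
  (forall m sig gs, has_D S = true -> idx_below m gs -> In A (map (Box m) sig ++ boxed gs) ->
     wf_seq (map (Box m) sig ++ boxed gs, []) ->
     Der S false (sig ++ unboxed_and_boxed gs, []) ->
     Der S false (Gx ++ rem A (sig ++ unboxed_and_boxed gs), [] ++ Dx) ->
     Der S false (Gx ++ rem A (map (Box m) sig ++ boxed gs), [] ++ Dx)) ->
  (forall m sig gs C, has_S S = true -> idx_below m gs -> In A (map (Box m) sig ++ boxed gs) ->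
     wf_seq (map (Box m) sig ++ boxed gs, [Box m C]) ->
     Der S false (sig ++ boxed gs, [C]) ->
     Der S false (Gx ++ rem A (sig ++ boxed gs), [C] ++ Dx) ->
     Der S false (Gx ++ rem A (map (Box m) sig ++ boxed gs), [Box m C] ++ Dx)) ->
  Der S false (Gx ++ rem A (fst s), snd s ++ Dx).
Proof.
  intros r ws ds wGx wDx IH Hps Hid Hbot Ha1 Ha2 Ho Hi Hn Hb H4 HD HS.
  assert (Hnot : ~ In A (fst s) -> Der S false (Gx ++ rem A (fst s), snd s ++ Dx)).
  { intros Hn'. destruct s as [G D]. simpl in *. apply struct with (1 := ds).
    - intros x Hx. apply in_app_iff. right. apply in_rem. split; auto. intros ->; auto.
    - intros x Hx; apply in_app_iff; auto.
    - destruct ws; apply Forall_app; split; auto. apply Forall_rem; auto.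
    - destruct ws; apply Forall_app; split; auto. }
  destruct r; simpl in *;
  try (pose proof (IH _ (or_introl eq_refl)) as I1; simpl in I1;
       pose proof (Hps _ (or_introl eq_refl)) as P1);
  try (pose proof (IH _ (or_intror (or_introl eq_refl))) as I2; simpl in I2;
       pose proof (Hps _ (or_intror (or_introl eq_refl))) as P2);
  clear IH Hps.
  -
    eapply der_perm; [exact I1| |]. apply Permutation_app_head, perm_rem; auto.
    apply Permutation_app_tail; auto.
  -
    destruct (form_eq_dec A0 A) as [->|ne]; [apply Hid; wf_decomp; auto|].
    apply struct with (1 := der0 S false _ (r_id S false A0) ws); [incl_tac|incl_tac|wf_decomp; wf_tac|wf_decomp; wf_tac].
  -
    destruct (form_eq_dec Bot A) as [<-|ne].
    + apply struct with (1 := Hbot eq_refl); [incl_tac|incl_tac|wf_decomp; wf_tac|wf_decomp; wf_tac].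
    + apply struct with (1 := der0 S false _ (r_bot S false) ws); [incl_tac|incl_tac|wf_decomp; wf_tac|wf_decomp; wf_tac].
  - st I1.
  - st I1.
  - st I1.
  - st I1.
  - discriminate.
  -
    destruct (form_eq_dec (And A0 B) A) as [<-|ne]; [apply (Ha1 A0 B); auto|].
    wfd P1. wf_decomp.
    assert (d : Der S false (A0 :: Gx ++ rem A G, D ++ Dx)) by st I1.
    ap1 (r_andL1 S false _ _ A0 B) d.
  -
    destruct (form_eq_dec (And A0 B) A) as [<-|ne]; [apply (Ha2 A0 B); auto|].
    wfd P1. wf_decomp.
    assert (d : Der S false (B :: Gx ++ rem A G, D ++ Dx)) by st I1.
    ap1 (r_andL2 S false _ _ A0 B) d.
  -
    wfd P1; wfd P2. wf_decomp.
    assert (d1 : Der S false (Gx ++ rem A G, (D ++ Dx) ++ [A0])) by st I1.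
    assert (d2 : Der S false (Gx ++ rem A G, (D ++ Dx) ++ [B])) by st I2.
    ap2 r_andR d1 d2.
  -
    destruct (form_eq_dec (Or A0 B) A) as [<-|ne]; [apply (Ho A0 B); auto|].
    wfd P1; wfd P2. wf_decomp.
    assert (d1 : Der S false (A0 :: Gx ++ rem A G, D ++ Dx)) by st I1.
    assert (d2 : Der S false (B :: Gx ++ rem A G, D ++ Dx)) by st I2.
    ap2 r_orL d1 d2.
  -
    wfd P1. wf_decomp.
    assert (d1 : Der S false (Gx ++ rem A G, (D ++ Dx) ++ [A0])) by st I1.
    ap1 (r_orR1 S false _ _ A0 B) d1.
  -
    wfd P1. wf_decomp.
    assert (d1 : Der S false (Gx ++ rem A G, (D ++ Dx) ++ [B])) by st I1.
    ap1 (r_orR2 S false _ _ A0 B) d1.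
  -
    destruct (form_eq_dec (Imp A0 B) A) as [<-|ne]; [apply (Hi A0 B); auto|].
    wfd P1; wfd P2. wf_decomp.
    assert (d1 : Der S false (Gx ++ rem A G0, (D0 ++ Dx) ++ [A0])) by st I1.
    assert (d2 : Der S false (B :: Gx ++ rem A G1, D1 ++ Dx)) by st I2.
    ap2 r_impL d1 d2.
  -
    wfd P1. wf_decomp.
    assert (d1 : Der S false (A0 :: Gx ++ rem A G, (D ++ Dx) ++ [B])) by st I1.
    ap1 r_impR d1.
  -
    destruct (form_eq_dec (Neg A0) A) as [<-|ne]; [apply (Hn A0); auto|].
    wfd P1. wf_decomp.
    assert (d1 : Der S false (Gx ++ rem A G, (D ++ Dx) ++ [A0])) by st I1.
    ap1 r_negL d1.
  -
    wfd P1. wf_decomp.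
    assert (d1 : Der S false (A0 :: Gx ++ rem A G, D ++ Dx)) by st I1.
    ap1 r_negR d1.
  -
    destruct (in_dec form_eq_dec A (map (Box n) sig ++ boxed gs)) as [Hin|Hnin]; [|apply Hnot; auto].
    apply H4; auto.
  -
    destruct (in_dec form_eq_dec A (map (Box n) sig ++ boxed gs)) as [Hin|Hnin]; [|apply Hnot; auto].
    apply HD; auto.
  -
    destruct (in_dec form_eq_dec A (map (Box n) sig ++ boxed gs)) as [Hin|Hnin]; [|apply Hnot; auto].
    apply HS; auto.
  -
    destruct (form_eq_dec (Box n A0) A) as [<-|ne]; [apply (Hb n A0); auto|].
    wfd P1. wf_decomp.
    assert (d1 : Der S false (A0 :: Gx ++ rem A G, D ++ Dx)) by st I1.
    ap1 (r_boxL S false n) d1.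
Qed.

Lemma R_ext S A Gx Dx ps s :
  Rule S false ps s -> wf_seq s -> Der S false s ->
  Forall wf Gx -> Forall wf Dx ->
  (forall p, In p ps -> Der S false (fst p ++ Gx, rem A (snd p) ++ Dx)) ->
  (forall p, In p ps -> Der S false p) ->
  (wf A -> Der S false ([A] ++ Gx, rem A [A] ++ Dx)) ->
  (forall P Q G D, A = And P Q -> wf_seq (G, D ++ [A]) ->
     Der S false (G ++ Gx, rem A (D ++ [P]) ++ Dx) -> Der S false (G ++ Gx, rem A (D ++ [Q]) ++ Dx) ->
     Der S false (G ++ Gx, rem A (D ++ [A]) ++ Dx)) ->
  (forall P Q G D, A = Or P Q -> wf_seq (G, D ++ [A]) ->
     Der S false (G ++ Gx, rem A (D ++ [P]) ++ Dx) -> Der S false (G ++ Gx, rem A (D ++ [A]) ++ Dx)) ->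
  (forall P Q G D, A = Or P Q -> wf_seq (G, D ++ [A]) ->
     Der S false (G ++ Gx, rem A (D ++ [Q]) ++ Dx) -> Der S false (G ++ Gx, rem A (D ++ [A]) ++ Dx)) ->
  (forall P Q G D, A = Imp P Q -> wf_seq (G, D ++ [A]) ->
     Der S false ((P :: G) ++ Gx, rem A (D ++ [Q]) ++ Dx) -> Der S false (G ++ Gx, rem A (D ++ [A]) ++ Dx)) ->
  (forall P G D, A = Neg P -> wf_seq (G, D ++ [A]) ->
     Der S false ((P :: G) ++ Gx, rem A D ++ Dx) -> Der S false (G ++ Gx, rem A (D ++ [A]) ++ Dx)) ->
  (forall n sig gs C, has_4 S = true -> idx_below n gs -> A = Box n C ->
     wf_seq (map (Box n) sig ++ boxed gs, [A]) ->
     Der S false (sig ++ unboxed_and_boxed gs, [C]) ->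
     Der S false ((map (Box n) sig ++ boxed gs) ++ Gx, rem A [A] ++ Dx)) ->
  (forall n sig gs C, has_S S = true -> idx_below n gs -> A = Box n C ->
     wf_seq (map (Box n) sig ++ boxed gs, [A]) ->
     Der S false (sig ++ boxed gs, [C]) ->
     Der S false ((map (Box n) sig ++ boxed gs) ++ Gx, rem A [A] ++ Dx)) ->
  Der S false (fst s ++ Gx, rem A (snd s) ++ Dx).
Proof.
  intros r ws ds wGx wDx IH Hps Hid Ha Ho1 Ho2 Hi Hn H4 HS.
  assert (Hnot : ~ In A (snd s) -> Der S false (fst s ++ Gx, rem A (snd s) ++ Dx)).
  { intros Hn'. destruct s as [G D]. simpl in *. apply struct with (1 := ds).
    - intros x Hx; apply in_app_iff; auto.
    - intros x Hx. apply in_app_iff. left. apply in_rem. split; auto. intros ->; auto.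
    - destruct ws; apply Forall_app; split; auto.
    - destruct ws; apply Forall_app; split; auto. apply Forall_rem; auto. }
  destruct r; simpl in *;
  try (pose proof (IH _ (or_introl eq_refl)) as I1; simpl in I1;
       pose proof (Hps _ (or_introl eq_refl)) as P1);
  try (pose proof (IH _ (or_intror (or_introl eq_refl))) as I2; simpl in I2;
       pose proof (Hps _ (or_intror (or_introl eq_refl))) as P2);
  clear IH Hps.
  -
    eapply der_perm; [exact I1| |]. apply Permutation_app_tail; auto.
    apply Permutation_app_tail, perm_rem; auto.
  -
    destruct (form_eq_dec A0 A) as [->|ne]; [apply Hid; wf_decomp; auto|].
    apply struct with (1 := der0 S false _ (r_id S false A0) ws); [incl_tac|incl_tac|wf_decomp; wf_tac|wf_decomp; wf_tac].
  -
    apply struct with (1 := der0 S false _ (r_bot S false) ws); [incl_tac|incl_tac|wf_decomp; wf_tac|wf_decomp; wf_tac].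
  - st I1.
  - st I1.
  - st I1.
  - st I1.
  - discriminate.
  -
    wfd P1. wf_decomp.
    assert (d : Der S false (A0 :: G ++ Gx, rem A D ++ Dx)) by st I1.
    ap1 (r_andL1 S false _ _ A0 B) d.
  -
    wfd P1. wf_decomp.
    assert (d : Der S false (B :: G ++ Gx, rem A D ++ Dx)) by st I1.
    ap1 (r_andL2 S false _ _ A0 B) d.
  -
    destruct (form_eq_dec (And A0 B) A) as [<-|ne]; [apply (Ha A0 B); auto|].
    wfd P1; wfd P2. wf_decomp.
    assert (d1 : Der S false (G ++ Gx, (rem A D ++ Dx) ++ [A0])) by st I1.
    assert (d2 : Der S false (G ++ Gx, (rem A D ++ Dx) ++ [B])) by st I2.
    ap2 r_andR d1 d2.
  -
    wfd P1; wfd P2. wf_decomp.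
    assert (d1 : Der S false (A0 :: G ++ Gx, rem A D ++ Dx)) by st I1.
    assert (d2 : Der S false (B :: G ++ Gx, rem A D ++ Dx)) by st I2.
    ap2 r_orL d1 d2.
  -
    destruct (form_eq_dec (Or A0 B) A) as [<-|ne]; [apply (Ho1 A0 B); auto|].
    wfd P1. wf_decomp.
    assert (d1 : Der S false (G ++ Gx, (rem A D ++ Dx) ++ [A0])) by st I1.
    ap1 (r_orR1 S false _ _ A0 B) d1.
  -
    destruct (form_eq_dec (Or A0 B) A) as [<-|ne]; [apply (Ho2 A0 B); auto|].
    wfd P1. wf_decomp.
    assert (d1 : Der S false (G ++ Gx, (rem A D ++ Dx) ++ [B])) by st I1.
    ap1 (r_orR2 S false _ _ A0 B) d1.
  -
    wfd P1; wfd P2. wf_decomp.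
    assert (d1 : Der S false (G0 ++ Gx, (rem A D0 ++ Dx) ++ [A0])) by st I1.
    assert (d2 : Der S false (B :: G1 ++ Gx, rem A D1 ++ Dx)) by st I2.
    ap2 r_impL d1 d2.
  -
    destruct (form_eq_dec (Imp A0 B) A) as [<-|ne]; [apply (Hi A0 B); auto|].
    wfd P1. wf_decomp.
    assert (d1 : Der S false (A0 :: G ++ Gx, (rem A D ++ Dx) ++ [B])) by st I1.
    ap1 r_impR d1.
  -
    wfd P1. wf_decomp.
    assert (d1 : Der S false (G ++ Gx, (rem A D ++ Dx) ++ [A0])) by st I1.
    ap1 r_negL d1.
  -
    destruct (form_eq_dec (Neg A0) A) as [<-|ne]; [apply (Hn A0); auto|].
    wfd P1. wf_decomp.
    assert (d1 : Der S false (A0 :: G ++ Gx, rem A D ++ Dx)) by st I1.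
    ap1 r_negR d1.
  -
    destruct (form_eq_dec (Box n A0) A) as [<-|ne]; [eapply H4; eauto|].
    apply Hnot. simpl. intuition.
  -
    apply Hnot. simpl. intuition.
  -
    destruct (form_eq_dec (Box n A0) A) as [<-|ne]; [eapply HS; eauto|].
    apply Hnot. simpl. intuition.
  -
    wfd P1. wf_decomp.
    assert (d1 : Der S false (A0 :: G ++ Gx, rem A D ++ Dx)) by st I1.
    ap1 (r_boxL S false n) d1.
Qed.

Lemma rem_self A : rem A [A] = [].
Proof. unfold rem; simpl. destruct (form_eq_dec A A); congruence. Qed.

Lemma in_box_shape A m sig gs : In A (map (Box m) sig ++ boxed gs) -> exists k P, A = Box k P.
Proof. intros H. inorm H. firstorder eauto. Qed.

Lemma idd S c A : wf A -> Der S c ([A],[A]).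
Proof. intros w. apply der0; [apply r_id| split; simpl; auto]. Qed.

Ltac vac := first [ intros; discriminate
  | let H := fresh in intros ? ? ? ? ? ? H ? ? ? ; apply in_box_shape in H; destruct H as [? [? ?]]; discriminate
  | let H := fresh in intros ? ? ? ? ? H ? ? ? ; apply in_box_shape in H; destruct H as [? [? ?]]; discriminate ].

Ltac inv_start d :=
  induction d as [ps s r ws Hps IH];
  eapply L_ext; eauto; [econstructor; eauto | repeat constructor; auto | try (intros p Hp; apply IH; auto) | ..]; try vac.

Lemma inv_and S B C : wf B -> wf C -> forall s, Der S false s ->
  Der S false ([B;C] ++ rem (And B C) (fst s), snd s ++ []).
Proof.
  intros wB wC s d. inv_start d.
  - intros w. rewrite rem_self. simpl in w; destruct w.
    simpl. apply der2 with ([B;C], [] ++ [B]) ([B;C], [] ++ [C]); [apply (r_andR S false [B;C] [] B C) | split; wf_tac | |].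
    + apply struct with (1 := idd S false B ltac:(auto)); [incl_tac|incl_tac|wf_tac|wf_tac].
    + apply struct with (1 := idd S false C ltac:(auto)); [incl_tac|incl_tac|wf_tac|wf_tac].
  - intros P Q G D E w d1. injection E as <- <-. wf_decomp. st d1.
  - intros P Q G D E w d1. injection E as <- <-. wf_decomp. st d1.
Qed.

Lemma inv_or1 S B C : wf B -> forall s, Der S false s ->
  Der S false ([B] ++ rem (Or B C) (fst s), snd s ++ []).
Proof.
  intros wB s d. inv_start d.
  - intros w. rewrite rem_self. simpl in w; destruct w. simpl.
    apply der1 with ([B], [] ++ [B]); [apply (r_orR1 S false [B] [] B C) | split; wf_tac | ].
    apply idd; auto.
  - intros P Q G D E w d1 d2. injection E as <- <-. wf_decomp. st d1.
Qed.

Lemma inv_or2 S B C : wf C -> forall s, Der S false s ->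
  Der S false ([C] ++ rem (Or B C) (fst s), snd s ++ []).
Proof.
  intros wC s d. inv_start d.
  - intros w. rewrite rem_self. simpl in w; destruct w. simpl.
    apply der1 with ([C], [] ++ [C]); [apply (r_orR2 S false [C] [] B C) | split; wf_tac | ].
    apply idd; auto.
  - intros P Q G D E w d1 d2. injection E as <- <-. wf_decomp. st d2.
Qed.

Lemma inv_imp1 S B C : wf B -> forall s, Der S false s ->
  Der S false ([] ++ rem (Imp B C) (fst s), snd s ++ [B]).
Proof.
  intros wB s d. inv_start d.
  - intros w. rewrite rem_self. simpl in w; destruct w. 
    eapply struct; [apply der1 with ([B], [B] ++ [C]); [apply (r_impR S false [] [B] B C) | split; wf_tac | ]| incl_tac | incl_tac | wf_tac | wf_tac].
    apply struct with (1 := idd S false B ltac:(auto)); [incl_tac|incl_tac|wf_tac|wf_tac].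
  - intros P Q G0 D0 G1 D1 E w d1 d2. injection E as <- <-. wf_decomp. wfd d1. wf_decomp. st d1.
Qed.

Lemma inv_imp2 S B C : wf C -> forall s, Der S false s ->
  Der S false ([C] ++ rem (Imp B C) (fst s), snd s ++ []).
Proof.
  intros wC s d. inv_start d.
  - intros w. rewrite rem_self. simpl in w; destruct w. 
    eapply struct; [apply der1 with ([B;C], [] ++ [C]); [apply (r_impR S false [C] [] B C) | split; wf_tac | ]| incl_tac | incl_tac | wf_tac | wf_tac].
    apply struct with (1 := idd S false C ltac:(auto)); [incl_tac|incl_tac|wf_tac|wf_tac].
  - intros P Q G0 D0 G1 D1 E w d1 d2. injection E as <- <-. wf_decomp. wfd d2. wf_decomp. st d2.
Qed.

Lemma inv_neg S B : wf B -> forall s, Der S false s ->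
  Der S false ([] ++ rem (Neg B) (fst s), snd s ++ [B]).
Proof.
  intros wB s d. inv_start d.
  - intros w. rewrite rem_self. simpl in w.
    eapply struct; [apply der1 with ([B], [B]); [apply (r_negR S false [] [B] B) | split; wf_tac | ]| incl_tac | incl_tac | wf_tac | wf_tac].
    apply idd; auto.
  - intros P G D E w d1. injection E as <-. wf_decomp. wfd d1. wf_decomp. st d1.
Qed.

Definition gfilt (A : form) (gs : list (nat * form)) :=
  filter (fun p => if form_eq_dec (Box (fst p) (snd p)) A then false else true) gs.

Lemma in_gfilt A k g gs : In (k,g) (gfilt A gs) <-> In (k,g) gs /\ Box k g <> A.
Proof. unfold gfilt. rewrite filter_In. cbn [fst snd]. destruct (form_eq_dec (Box k g) A); intuition congruence. Qed.

Definition pn (n : nat) (sig : list form) : list (nat * form) := map (fun y => (n, y)) sig.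

Lemma in_pairs k g n sig : In (k,g) (pn n sig) <-> k = n /\ In g sig.
Proof. unfold pn. rewrite in_map_iff. split; [intros [y [E H]]; injection E as -> ->; auto | intros [-> H]; eauto]. Qed.

Lemma idx_gfilt m A gs : idx_below m gs -> idx_below m (gfilt A gs).
Proof. unfold idx_below, gfilt. intros H. apply Forall_forall. intros p Hp. apply filter_In in Hp.
  rewrite Forall_forall in H. apply H; tauto. Qed.

Lemma idx_pairs m n sig : n < m -> idx_below m (pn n sig).
Proof. intros H. unfold idx_below, pn. apply Forall_forall. intros p Hp. apply in_map_iff in Hp.
  destruct Hp as [y [<- _]]. auto. Qed.

Lemma idx_mono m m' gs : m <= m' -> idx_below m gs -> idx_below m' gs.
Proof. unfold idx_below. rewrite !Forall_forall. intros H1 H2 p Hp. specialize (H2 p Hp). lia. Qed.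

Lemma idx_in m gs k g : idx_below m gs -> In (k,g) gs -> k < m.
Proof. unfold idx_below. rewrite Forall_forall. intros H Hin. apply (H _ Hin). Qed.

Lemma wf_mapbox n sig : Forall wf (map (Box n) sig) -> Forall wf sig.
Proof. rewrite !Forall_forall. intros H x Hx. apply (H (Box n x)). apply in_map; auto. Qed.

Lemma wf_ub gs : Forall wf (boxed gs) -> Forall wf (unboxed_and_boxed gs).
Proof. rewrite !Forall_forall. intros H x Hx. apply in_ub in Hx. destruct Hx as [k [g [Hin [->| ->]]]].
  - apply (H (Box k g)). apply in_boxed. eauto.
  - apply H. apply in_boxed. eauto. Qed.

Lemma boxL_all S n Y (hS : has_S S = true) : forall sig X,
  Forall wf (map (Box n) sig) -> Der S false (sig ++ X, Y) -> Der S false (map (Box n) sig ++ X, Y).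
Proof.
  induction sig as [|a sig IH]; simpl; intros X w d; auto.
  inversion w; subst.
  assert (d1 : Der S false (map (Box n) sig ++ a :: X, Y)).
  { apply IH; auto. eapply der_perm; [exact d| |reflexivity]. apply Permutation_middle. }
  assert (d2 : Der S false (a :: map (Box n) sig ++ X, Y)).
  { eapply der_perm; [exact d1| |reflexivity]. symmetry; apply Permutation_middle. }
  wfd d2. apply der1 with (1 := r_boxL S false n _ _ a hS); auto.
  split; simpl; auto. constructor; auto. inversion w0; auto.
Qed.

Tactic Notation "wf_by" constr(L) := apply (Forall_incl' _ L); [repeat (apply Forall_app; split); assumption | incl_tac].

Ltac inorm H ::= repeat (first [setoid_rewrite in_app_iff in H | setoid_rewrite in_rem in H | setoid_rewrite in_boxed in H
   | setoid_rewrite in_ub in H | setoid_rewrite in_mapbox in H | setoid_rewrite in_gfilt in H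
   | setoid_rewrite in_pairs in H | progress simpl in H]).
Ltac gnorm ::= repeat (first [setoid_rewrite in_app_iff | setoid_rewrite in_rem | setoid_rewrite in_boxed
   | setoid_rewrite in_ub | setoid_rewrite in_mapbox | setoid_rewrite in_gfilt | setoid_rewrite in_pairs | progress simpl]).


Lemma in_rem_i A x l : In x l -> x <> A -> In x (rem A l).
Proof. intros. apply in_rem; auto. Qed.
Lemma in_boxed_i k g gs : In (k,g) gs -> In (Box k g) (boxed gs).
Proof. intros. apply in_boxed; eauto. Qed.
Lemma in_ub_1 k g gs : In (k,g) gs -> In g (unboxed_and_boxed gs).
Proof. intros. apply in_ub; eauto. Qed.
Lemma in_ub_2 k g gs : In (k,g) gs -> In (Box k g) (unboxed_and_boxed gs).
Proof. intros. apply in_ub; eauto. Qed.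
Lemma in_pn_i n g sig : In g sig -> In (n,g) (pn n sig).
Proof. intros. apply in_pairs; auto. Qed.
Lemma in_gfilt_i A k g gs : In (k,g) gs -> Box k g <> A -> In (k,g) (gfilt A gs).
Proof. intros. apply in_gfilt; auto. Qed.
Lemma in_mapbox_i n y sig : In y sig -> In (Box n y) (map (Box n) sig).
Proof. intros. apply in_map; auto. Qed.
Lemma in_app_l (x : form) l1 l2 : In x l1 -> In x (l1 ++ l2).
Proof. intros; apply in_or_app; auto. Qed.
Lemma in_app_r (x : form) l1 l2 : In x l2 -> In x (l1 ++ l2).
Proof. intros; apply in_or_app; auto. Qed.
Lemma in_app_lp (x : nat * form) l1 l2 : In x l1 -> In x (l1 ++ l2).
Proof. intros; apply in_or_app; auto. Qed.
Lemma in_app_rp (x : nat * form) l1 l2 : In x l2 -> In x (l1 ++ l2).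
Proof. intros; apply in_or_app; auto. Qed.
Lemma in_hd (x : form) l : In x (x :: l).
Proof. left; auto. Qed.
Lemma in_tl (x y : form) l : In x l -> In x (y :: l).
Proof. right; auto. Qed.

Lemma wf_box_i n C : wf C -> boxes_lt n C -> wf (Box n C).
Proof. simpl; auto. Qed.

Create HintDb inclh.
#[export] Hint Resolve wf_box_i : inclh.
#[export] Hint Resolve in_rem_i in_boxed_i in_ub_1 in_ub_2 in_pn_i in_gfilt_i in_mapbox_i
  in_app_l in_app_r in_app_lp in_app_rp in_hd in_tl : inclh.
#[export] Hint Extern 2 (_ <> _) => congruence : inclh.
#[export] Hint Extern 2 (_ = _) => congruence : inclh.

Ltac incl_tac ::= let x := fresh "x" in let H := fresh "Hin" in
  intros x H; repeat match goal with G : context [Der] |- _ => clear G end;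
  split_rems x; inorm H; repeat match goal with
    | K : _ \/ _ |- _ => destruct K | K : _ /\ _ |- _ => destruct K
    | K : exists _, _ |- _ => destruct K | K : False |- _ => destruct K end; subst;
  repeat match goal with E : Box _ _ = Box _ _ |- _ => injection E; clear E; intros; subst end;
  try solve [exfalso; congruence]; eauto 12 with inclh nocore.



Ltac wf_tac2 := rewrite Forall_forall; let x := fresh "x" in let H := fresh "Hin" in intros x H;
  repeat match goal with G : context [Der] |- _ => clear G end;
  repeat match goal with W : Forall wf _ |- _ => rewrite Forall_forall in W end;
  inorm H; repeat match goal with
    | K : _ \/ _ |- _ => destruct K | K : _ /\ _ |- _ => destruct K
    | K : exists _, _ |- _ => destruct K | K : False |- _ => destruct K end; subst;
  repeat match goal with E : Box _ _ = Box _ _ |- _ => injection E; clear E; intros; subst end;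
  try solve [exfalso; congruence]; eauto 12 with inclh.

Ltac st2 d := apply struct with (1 := d); [incl_tac | incl_tac | wf_tac2 | wf_tac2].

Arguments gfilt : simpl never.
Arguments pn : simpl never.

Definition MixP S B := forall G0 D0 G1 D1, Der S false (G0,D0) -> Der S false (G1,D1) ->
   Der S false (G0 ++ rem B G1, rem B D0 ++ D1).

Lemma box_right S n B sig gs :
  MixP S B -> idx_below n gs ->
  Der S false (map (Box n) sig ++ boxed gs, [Box n B]) ->
  ( (has_4 S = true /\ Der S false (sig ++ unboxed_and_boxed gs, [B])) \/
    (has_S S = true /\ Der S false (sig ++ boxed gs, [B])) ) ->
  forall s, Der S false s ->
  Der S false ((map (Box n) sig ++ boxed gs) ++ rem (Box n B) (fst s), snd s ++ []).
Proof.
  intros mixB idx d0 Hprem s d.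
  wfd d0. rename w into wL0. rename w0 into wA.
  assert (wsig : Forall wf sig) by (apply Forall_app in wL0; destruct wL0; eapply wf_mapbox; eauto).
  assert (wmsig : Forall wf (map (Box n) sig)) by (apply Forall_app in wL0; tauto).
  assert (wbgs : Forall wf (boxed gs)) by (apply Forall_app in wL0; tauto).
  assert (wubgs : Forall wf (unboxed_and_boxed gs)) by (apply wf_ub; auto).
  assert (wB : wf B) by (inversion wA; simpl in *; tauto).
  induction d as [ps s r ws Hps IH].
  eapply L_ext; [exact r | exact ws | exact (der _ _ ps s r ws Hps) | exact wL0 | constructor
    | intros p Hp; apply IH; auto | exact Hps | ..]; try (intros; discriminate).
  -
    intros _. st d0.
  -
    intros n' P G D E hS w d1. injection E as <- <-.
    assert (dB : Der S false (map (Box n) sig ++ boxed gs, [B])).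
    { destruct Hprem as [[h4 _]|[_ dP]]; [destruct S; discriminate|]. apply boxL_all; auto. }
    pose proof (mixB _ _ _ _ dB d1) as dm. wf_decomp. wfd d1.
    st dm.
  -
    intros m sig' gs' C h4 idx' Hin w dP dIH.
    destruct Hprem as [[_ P]|[hS _]]; [|destruct S; discriminate].
    wf_decomp.
    assert (wsig' : Forall wf sig') by (eapply wf_mapbox; eauto).
    assert (wub' : Forall wf (unboxed_and_boxed gs')) by (apply wf_ub; auto).
    apply in_app_iff in Hin. destruct Hin as [Hin|Hin].
    + apply in_mapbox in Hin. destruct Hin as [y [Hy E]]. injection E as E1 E2. subst m y.
      assert (Hne : forall k g, In (k,g) gs' -> Box k g <> Box n B).
      { intros k g Hk E. injection E as -> ->. pose proof (idx_in _ _ _ _ idx' Hk). lia. }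
      pose proof (mixB _ _ _ _ P dP) as dm.
      assert (idx2 : idx_below n (gs ++ gs')) by (apply Forall_app; split; auto).
      assert (d1 : Der S false ((sig ++ rem B sig') ++ unboxed_and_boxed (gs ++ gs'), [C])) by st2 dm.
      eapply struct; [eapply der1 with (3 := d1); [apply (r_box4R S false n _ _ C h4 idx2) | split; wf_tac2]
        | incl_tac | incl_tac | wf_tac2 | wf_tac2].

    + apply in_boxed in Hin. destruct Hin as [k [g [Hkg E]]]. injection E as E1 E2. subst k g.
      pose proof (idx_in _ _ _ _ idx' Hkg) as Hlt.
      assert (Hmn : m <> n) by lia.
      pose proof (mixB _ _ _ _ P dIH) as dm.
      assert (idx2 : idx_below m (pn n sig ++ gs ++ gfilt (Box n B) gs')).
      { apply Forall_app; split; [apply idx_pairs; auto|].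
        apply Forall_app; split; [apply idx_mono with n; auto; lia | apply idx_gfilt; auto]. }
      assert (d1 : Der S false (sig' ++ unboxed_and_boxed (pn n sig ++ gs ++ gfilt (Box n B) gs'), [C])) by st2 dm.
      eapply struct; [eapply der1 with (3 := d1); [apply (r_box4R S false m _ _ C h4 idx2) | split; wf_tac2]
        | incl_tac | incl_tac | wf_tac2 | wf_tac2].
  -
    intros m sig' gs' hD idx' Hin w dP dIH.
    destruct Hprem as [[_ P]|[hS _]]; [|destruct S; discriminate].
    assert (h4 : has_4 S = true) by (destruct S; auto).
    wf_decomp.
    assert (wsig' : Forall wf sig') by (eapply wf_mapbox; eauto).
    assert (wub' : Forall wf (unboxed_and_boxed gs')) by (apply wf_ub; auto).
    apply in_app_iff in Hin. destruct Hin as [Hin|Hin].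
    + apply in_mapbox in Hin. destruct Hin as [y [Hy E]]. injection E as E1 E2. subst m y.
      assert (Hne : forall k g, In (k,g) gs' -> Box k g <> Box n B).
      { intros k g Hk E. injection E as -> ->. pose proof (idx_in _ _ _ _ idx' Hk). lia. }
      pose proof (mixB _ _ _ _ P dP) as dm.
      assert (idx2 : idx_below n (gs ++ gs')) by (apply Forall_app; split; auto).
      assert (d1 : Der S false ((sig ++ rem B sig') ++ unboxed_and_boxed (gs ++ gs'), [])) by st2 dm.
      eapply struct; [eapply der1 with (3 := d1); [apply (r_boxDR S false n _ _ hD idx2) | split; wf_tac2]
        | incl_tac | incl_tac | wf_tac2 | wf_tac2].
    + apply in_boxed in Hin. destruct Hin as [k [g [Hkg E]]]. injection E as E1 E2. subst k g.
      pose proof (idx_in _ _ _ _ idx' Hkg) as Hlt.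
      assert (Hmn : m <> n) by lia.
      pose proof (mixB _ _ _ _ P dIH) as dm.
      assert (idx2 : idx_below m (pn n sig ++ gs ++ gfilt (Box n B) gs')).
      { apply Forall_app; split; [apply idx_pairs; auto|].
        apply Forall_app; split; [apply idx_mono with n; auto; lia | apply idx_gfilt; auto]. }
      assert (d1 : Der S false (sig' ++ unboxed_and_boxed (pn n sig ++ gs ++ gfilt (Box n B) gs'), [])) by st2 dm.
      eapply struct; [eapply der1 with (3 := d1); [apply (r_boxDR S false m _ _ hD idx2) | split; wf_tac2]
        | incl_tac | incl_tac | wf_tac2 | wf_tac2].
  -
    intros m sig' gs' C hS idx' Hin w dP dIH.
    destruct Hprem as [[h4 _]|[_ P]]; [destruct S; discriminate|].
    wf_decomp.
    assert (wsig' : Forall wf sig') by (eapply wf_mapbox; eauto).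
    apply in_app_iff in Hin. destruct Hin as [Hin|Hin].
    + apply in_mapbox in Hin. destruct Hin as [y [Hy E]]. injection E as E1 E2. subst m y.
      assert (Hne : forall k g, In (k,g) gs' -> Box k g <> Box n B).
      { intros k g Hk E. injection E as -> ->. pose proof (idx_in _ _ _ _ idx' Hk). lia. }
      pose proof (mixB _ _ _ _ P dP) as dm.
      assert (idx2 : idx_below n (gs ++ gs')) by (apply Forall_app; split; auto).
      assert (d1 : Der S false ((sig ++ rem B sig') ++ boxed (gs ++ gs'), [C])) by st2 dm.
      eapply struct; [eapply der1 with (3 := d1); [apply (r_boxSR S false n _ _ C hS idx2) | split; wf_tac2]
        | incl_tac | incl_tac | wf_tac2 | wf_tac2].
    + apply in_boxed in Hin. destruct Hin as [k [g [Hkg E]]]. injection E as E1 E2. subst k g.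
      pose proof (idx_in _ _ _ _ idx' Hkg) as Hlt.
      assert (Hmn : m <> n) by lia.
      assert (idx2 : idx_below m (pn n sig ++ gs ++ gfilt (Box n B) gs')).
      { apply Forall_app; split; [apply idx_pairs; auto|].
        apply Forall_app; split; [apply idx_mono with n; auto; lia | apply idx_gfilt; auto]. }
      assert (d1 : Der S false (sig' ++ boxed (pn n sig ++ gs ++ gfilt (Box n B) gs'), [C])) by st2 dIH.
      eapply struct; [eapply der1 with (3 := d1); [apply (r_boxSR S false m _ _ C hS idx2) | split; wf_tac2]
        | incl_tac | incl_tac | wf_tac2 | wf_tac2].
Qed.

Lemma mix_core S A :
  (forall B C, A = And B C -> MixP S B /\ MixP S C) ->
  (forall B C, A = Or B C -> MixP S B /\ MixP S C) ->
  (forall B C, A = Imp B C -> MixP S B /\ MixP S C) ->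
  (forall B, A = Neg B -> MixP S B) ->
  (forall n B, A = Box n B -> MixP S B) ->
  MixP S A.
Proof.
  intros MA MO MI MN MB. unfold MixP at 1. intros G0 D0 G1 D1 d0 d1.
  wfd d1. rename w into wG1. rename w0 into wD1.
  assert (K : forall s, Der S false s -> Der S false (fst s ++ rem A G1, rem A (snd s) ++ D1)).
  2: { apply (K (G0,D0)); auto. }
  intros s d. induction d as [ps s r ws Hps IH].
  eapply R_ext; [exact r | exact ws | exact (der _ _ ps s r ws Hps) | apply Forall_rem; exact wG1 | exact wD1
    | intros p Hp; apply IH; auto | exact Hps | .. ].
  -
    intros wA. st2 d1.
  -
    intros P Q G D E w dl1 dl2. subst A. destruct (MA P Q eq_refl) as [mP mQ].
    wf_decomp.
    pose proof (inv_and S P Q ltac:(auto) ltac:(auto) (G1,D1) d1) as dinv. simpl in dinv.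
    pose proof (mQ _ _ _ _ dl2 dinv) as m1.
    assert (m1' : Der S false (P :: G ++ rem (And P Q) G1, rem (And P Q) (D ++ [And P Q]) ++ D1)) by st2 m1.
    pose proof (mP _ _ _ _ dl1 m1') as m2.
    st2 m2.
  -
    intros P Q G D E w dl. subst A. destruct (MO P Q eq_refl) as [mP mQ].
    wf_decomp.
    pose proof (inv_or1 S P Q ltac:(auto) (G1,D1) d1) as dinv. simpl in dinv.
    pose proof (mP _ _ _ _ dl dinv) as m1.
    st2 m1.
  -
    intros P Q G D E w dl. subst A. destruct (MO P Q eq_refl) as [mP mQ].
    wf_decomp.
    pose proof (inv_or2 S P Q ltac:(auto) (G1,D1) d1) as dinv. simpl in dinv.
    pose proof (mQ _ _ _ _ dl dinv) as m1.
    st2 m1.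
  -
    intros P Q G D E w dl. subst A. destruct (MI P Q eq_refl) as [mP mQ].
    wf_decomp.
    pose proof (inv_imp1 S P Q ltac:(auto) (G1,D1) d1) as dinv1. simpl in dinv1.
    pose proof (inv_imp2 S P Q ltac:(auto) (G1,D1) d1) as dinv2. simpl in dinv2.
    pose proof (mQ _ _ _ _ dl dinv2) as m1.
    assert (m1' : Der S false (P :: G ++ rem (Imp P Q) G1, rem (Imp P Q) (D ++ [Imp P Q]) ++ D1)) by st2 m1.
    pose proof (mP _ _ _ _ dinv1 m1') as m2.
    st2 m2.
  -
    intros P G D E w dl. subst A. pose proof (MN P eq_refl) as mP.
    wf_decomp.
    pose proof (inv_neg S P ltac:(auto) (G1,D1) d1) as dinv. simpl in dinv.
    pose proof (mP _ _ _ _ dinv dl) as m1.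
    st2 m1.
  -
    intros n sig gs C h4 idx E w dP. subst A. pose proof (MB n C eq_refl) as mC.
    assert (d0' : Der S false (map (Box n) sig ++ boxed gs, [Box n C])).
    { apply der1 with (1 := r_box4R S false n sig gs C h4 idx); auto. }
    pose proof (box_right S n C sig gs mC idx d0' (or_introl (conj h4 dP)) (G1,D1) d1) as m1.
    simpl in m1. wf_decomp. st2 m1.
  -
    intros n sig gs C hS idx E w dP. subst A. pose proof (MB n C eq_refl) as mC.
    assert (d0' : Der S false (map (Box n) sig ++ boxed gs, [Box n C])).
    { apply der1 with (1 := r_boxSR S false n sig gs C hS idx); auto. }
    pose proof (box_right S n C sig gs mC idx d0' (or_intror (conj hS dP)) (G1,D1) d1) as m1.
    simpl in m1. wf_decomp. st2 m1.
Qed.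

Lemma mix S : forall A, MixP S A.
Proof.
  induction A; apply mix_core; intros; try discriminate;
  match goal with H : _ = _ |- _ => injection H; intros; subst end; auto.
Qed.

Lemma rule_tf S ps s : Rule S true ps s -> Rule S false ps s \/
  exists G0 D0 G1 D1 A, ps = [(G0, D0 ++ [A]); (A :: G1, D1)] /\ s = (G0 ++ G1, D0 ++ D1).
Proof.
  destruct 1;
  [ left; apply r_perm; auto | left; apply r_id | left; apply r_bot | left; apply r_wL | left; apply r_wR
  | left; apply r_cL | left; apply r_cR | right; do 5 eexists; split; reflexivity
  | left; apply r_andL1 | left; apply r_andL2 | left; apply r_andR | left; apply r_orL
  | left; apply r_orR1 | left; apply r_orR2 | left; apply r_impL | left; apply r_impR
  | left; apply r_negL | left; apply r_negR | left; apply r_box4R; auto | left; apply r_boxDR; auto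
  | left; apply r_boxSR; auto | left; apply r_boxL; auto ].
Qed.

Theorem theorem3p8 :
  forall (S : system) (s : sequent), Der S true s -> Der S false s.
Proof.
  intros S s d. induction d as [ps s r ws Hps IH].
  destruct (rule_tf S ps s r) as [r'|[G0 [D0 [G1 [D1 [A [-> ->]]]]]]].
  - apply (der S false ps s r' ws). intros p Hp; apply IH; auto.
  - pose proof (IH _ (or_introl eq_refl)) as d1. pose proof (IH _ (or_intror (or_introl eq_refl))) as d2.
    pose proof (mix S A _ _ _ _ d1 d2) as m. wf_decomp.
    st2 m.
Qed.
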